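(* Let $(A,\cdot)$ be a nearly associative algebra over a field $\mathbb{K}$ of characteristic $0$. Then $(A,\cdot)$ is Lie-admissible, i.e. $(A,[\cdot,\cdot])$ with $[x,y]=x\cdot y-y\cdot x$ is a Lie algebra.
   Context: An algebra $(A,\cdot)$ is a linear space $A$ over $\mathbb{K}$ with a bilinear product $\cdot:A\times A\to A$. It is called nearly associative if $x\cdot(y\cdot z)=(z\cdot x)\cdot y$ for all $x,y,z\in A$. An algebra is Lie-admissible if the commutator bracket $[x,y]=x\cdot y-y\cdot x$ makes $A$ a Lie algebra. *)

(* Defs.v *)
From HB Require Import structures.
From mathcomp Require Import all_boot all_order all_algebra.
Set Implicit Arguments. Unset Strict Implicit. Unset Printing Implicit Defensive.
Import GRing.Theory.
Local Open Scope ring_scope.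

Definition bilinear_prod (K : fieldType) (A : lmodType K) (m : A -> A -> A) : Prop :=
  (forall (a : K) (x y z : A), m (a *: x + y) z = a *: m x z + m y z) /\
  (forall (a : K) (x y z : A), m x (a *: y + z) = a *: m x y + m x z).

Definition nearly_associative (K : fieldType) (A : lmodType K) (m : A -> A -> A) : Prop :=
  forall x y z : A, m x (m y z) = m (m z x) y.

Definition commutator (K : fieldType) (A : lmodType K) (m : A -> A -> A) : A -> A -> A :=
  fun x y => m x y - m y x.

Definition is_lie_algebra (K : fieldType) (A : lmodType K) (br : A -> A -> A) : Prop :=
  [/\ bilinear_prod br,
      (forall x : A, br x x = 0) &
      (forall x y z : A, br x (br y z) + br y (br z x) + br z (br x y) = 0)].

Definition lie_admissible (K : fieldType) (A : lmodType K) (m : A -> A -> A) : Prop :=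
  is_lie_algebra (commutator m).

(* Main.v *)
Require Import Defs.
From mathcomp Require Import all_boot all_order all_algebra.
From mathcomp Require Import ssrAC.
Import GRing.Theory.
Local Open Scope ring_scope.

Lemma jacobi_aux (V : zmodType) (a b c d e f : V) :
  a - b - (c - d) + (e - d - (a - f)) + (c - f - (e - b)) = 0.
Proof.
rewrite !opprB !addrA.
rewrite (ACl ((1*8)*(2*11)*(3*6)*(4*9)*(5*12)*(7*10))%AC) /=.
by rewrite !subrr !addNr !addr0.
Qed.

Theorem mainTheorem1 (K : fieldType) (A : lmodType K) (m : A -> A -> A) :
  [pchar K] =i pred0 ->
  bilinear_prod m ->
  nearly_associative m ->
  lie_admissible m.
Proof.
move=> _ [Hl Hr] N.
have m0l w : m 0 w = 0.
  by have := Hl 1 0 0 w; rewrite !scale1r addr0 => /(congr1 (fun t => t - m 0 w)); rewrite addrK subrr => <-.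
have m0r w : m w 0 = 0.
  by have := Hr 1 w 0 0; rewrite !scale1r addr0 => /(congr1 (fun t => t - m w 0)); rewrite addrK subrr => <-.
have mDl x y z : m (x + y) z = m x z + m y z by rewrite -{1}[x]scale1r Hl scale1r.
have mDr x y z : m z (x + y) = m z x + m z y by rewrite -{1}[x]scale1r Hr scale1r.
have mNl x z : m (- x) z = - m x z by have := Hl (-1) x 0 z; rewrite !addr0 m0l ?addr0 !scaleN1r.
have mNr x z : m z (- x) = - m z x by have := Hr (-1) z x 0; rewrite !addr0 m0r ?addr0 !scaleN1r.
rewrite /lie_admissible /is_lie_algebra; split.
- split => a x y z; rewrite /commutator Hl Hr scalerBr opprD addrACA //.
- by move=> x; rewrite /commutator subrr.
- move=> x y z; rewrite /commutator !(mDl, mDr, mNl, mNr) !N.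
  exact: jacobi_aux.
Qed.
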